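(* For $n\ge 2$, the group $TVH_n$ is generated by the elements $x_{kl}$ ($1\le k\ne l\le n$) and $\gamma_j$ ($1\le j\le n$), and a complete set of defining relations in these generators is: $x_{ij}x_{kl}=x_{kl}x_{ij}$ for pairwise distinct $i,j,k,l$; $x_{ik}x_{kj}x_{ik}=x_{kj}x_{ik}x_{kj}$ for pairwise distinct $i,j,k$; $\gamma_i^2=1$; $\gamma_i\gamma_j=\gamma_j\gamma_i$ for $i\ne j$; $x_{ij}\gamma_k=\gamma_k x_{ij}$ for pairwise distinct $i,j,k$; $x_{ij}=\gamma_i\gamma_j x_{ji}\gamma_j\gamma_i$ for $i\ne j$.
   Context: For $n\ge 2$, the twisted virtual braid group $TVB_n$ is the group with generators $\sigma_1,\dots,\sigma_{n-1}$, $\rho_1,\dots,\rho_{n-1}$, $\gamma_1,\dots,\gamma_n$ and defining relations: $\sigma_i\sigma_{i+1}\sigma_i=\sigma_{i+1}\sigma_i\sigma_{i+1}$ ($1\le i\le n-2$); $\sigma_i\sigma_j=\sigma_j\sigma_i$ ($|i-j|\ge 2$); $\rho_i^2=1$; $\rho_i\rho_j=\rho_j\rho_i$ ($|i-j|\ge2$); $\rho_i\rho_{i+1}\rho_i=\rho_{i+1}\rho_i\rho_{i+1}$ ($1\le i\le n-2$); $\sigma_i\rho_j=\rho_j\sigma_i$ ($|i-j|\ge 2$); $\rho_i\rho_{i+1}\sigma_i=\sigma_{i+1}\rho_i\rho_{i+1}$ ($1\le i\le n-2$); $\gamma_i^2=1$ and $\gamma_i\gamma_j=\gamma_j\gamma_i$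 (all $i,j$); $\gamma_j\rho_i=\rho_i\gamma_j$ and $\gamma_j\sigma_i=\sigma_i\gamma_j$ for $j\notin\{i,i+1\}$; $\rho_i\gamma_i=\gamma_{i+1}\rho_i$ ($1\le i\le n-1$); $\rho_i\sigma_i\rho_i=\gamma_{i+1}\gamma_i\sigma_i\gamma_i\gamma_{i+1}$ ($1\le i\le n-1$). $\varphi_H:TVB_n\to S_n$ is the homomorphism with $\sigma_i\mapsto e$, $\rho_i\mapsto(i,i+1)$, $\gamma_j\mapsto e$, and $TVH_n=\ker\varphi_H$. In $TVB_n$ define $x_{i,i+1}=\sigma_i$, $x_{i+1,i}=\rho_i\sigma_i\rho_i$ ($1\le i\le n-1$), and for $1\le i<j-1\le n-1$: $x_{ij}=\rho_{j-1}\cdots\rho_{i+1}\sigma_i\rho_{i+1}\cdots\rho_{j-1}$, $x_{ji}=\rho_{j-1}\cdots\rho_{i+1}\rho_i\sigma_i\rho_i\rho_{i+1}\cdots\rho_{j-1}$. *)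

(* Defs.v *)
From mathcomp Require Import all_boot.
Set Implicit Arguments. Unset Strict Implicit. Unset Printing Implicit Defensive.

(* A word over a generator type A is a seq of letters (a, b), where    *)
(* b = false means a and b = true means a^{-1}.                        *)
Definition word (A : Type) := seq (A * bool).

Definition winv (A : Type) (w : word A) : word A :=
  rev (map (fun p => (p.1, ~~ p.2)) w).

Definition gw (A : Type) (gs : seq A) : word A := map (fun g => (g, false)) gs.

Inductive pres_eq (A : Type) (R : word A -> word A -> Prop) : word A -> word A -> Prop :=
| pe_refl w : pres_eq R w w
| pe_sym u v : pres_eq R u v -> pres_eq R v u
| pe_trans u v w : pres_eq R u v -> pres_eq R v w -> pres_eq R u w
| pe_free u a b v : pres_eq R (u ++ (a, b) :: (a, ~~ b) :: v) (u ++ v)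
| pe_rel u r s v : R r s -> pres_eq R (u ++ r ++ v) (u ++ s ++ v).

Inductive tvb_gen := Sig of nat | Rho of nat | Gam of nat.

Definition tvb_gen_ok (n : nat) (g : tvb_gen) : bool :=
  match g with
  | Sig i => (1 <= i) && (i <= n - 1)
  | Rho i => (1 <= i) && (i <= n - 1)
  | Gam j => (1 <= j) && (j <= n)
  end.

Definition tvb_word_ok (n : nat) (w : word tvb_gen) : bool :=
  all (fun p => tvb_gen_ok n p.1) w.

Definition far (i j : nat) : Prop := (i + 2 <= j)%N \/ (j + 2 <= i)%N.

Definition tvb_rel (n : nat) (r s : word tvb_gen) : Prop :=
  (exists i, [/\ 1 <= i, i <= n - 2,
      r = gw [:: Sig i; Sig i.+1; Sig i] & s = gw [:: Sig i.+1; Sig i; Sig i.+1]])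
  \/ (exists i j, [/\ 1 <= i <= n - 1, 1 <= j <= n - 1, far i j,
      r = gw [:: Sig i; Sig j] & s = gw [:: Sig j; Sig i]])
  \/ (exists i, [/\ 1 <= i <= n - 1, r = gw [:: Rho i; Rho i] & s = [::]])
  \/ (exists i j, [/\ 1 <= i <= n - 1, 1 <= j <= n - 1, far i j,
      r = gw [:: Rho i; Rho j] & s = gw [:: Rho j; Rho i]])
  \/ (exists i, [/\ 1 <= i, i <= n - 2,
      r = gw [:: Rho i; Rho i.+1; Rho i] & s = gw [:: Rho i.+1; Rho i; Rho i.+1]])
  \/ (exists i j, [/\ 1 <= i <= n - 1, 1 <= j <= n - 1, far i j,
      r = gw [:: Sig i; Rho j] & s = gw [:: Rho j; Sig i]])
  \/ (exists i, [/\ 1 <= i, i <= n - 2,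
      r = gw [:: Rho i; Rho i.+1; Sig i] & s = gw [:: Sig i.+1; Rho i; Rho i.+1]])
  \/ (exists i, [/\ 1 <= i <= n, r = gw [:: Gam i; Gam i] & s = [::]])
  \/ (exists i j, [/\ 1 <= i <= n, 1 <= j <= n,
      r = gw [:: Gam i; Gam j] & s = gw [:: Gam j; Gam i]])
  \/ (exists i j, [/\ 1 <= i <= n - 1, 1 <= j <= n, (j != i) && (j != i.+1),
      r = gw [:: Gam j; Rho i] & s = gw [:: Rho i; Gam j]])
  \/ (exists i j, [/\ 1 <= i <= n - 1, 1 <= j <= n, (j != i) && (j != i.+1),
      r = gw [:: Gam j; Sig i] & s = gw [:: Sig i; Gam j]])
  \/ (exists i, [/\ 1 <= i <= n - 1,
      r = gw [:: Rho i; Gam i] & s = gw [:: Gam i.+1; Rho i]])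
  \/ (exists i, [/\ 1 <= i <= n - 1,
      r = gw [:: Rho i; Sig i; Rho i]
    & s = gw [:: Gam i.+1; Gam i; Sig i; Gam i; Gam i.+1]]).

Definition tvb_eq (n : nat) := pres_eq (tvb_rel n).

(* permutations realised as functions on nat {1..n} (fixing the rest) *)
Definition swap (a b k : nat) : nat := if k == a then b else if k == b then a else k.

Definition phiH_letter (p : tvb_gen * bool) : nat -> nat :=
  match p.1 with
  | Rho i => swap i i.+1
  | _ => id
  end.

Definition phiH (w : word tvb_gen) : nat -> nat :=
  foldr (fun p f => phiH_letter p \o f) id w.

(* w represents an element of TVH_n = ker phi_H *)
Definition in_TVH (n : nat) (w : word tvb_gen) : Prop :=
  forall k, 1 <= k <= n -> phiH w k = k.

Definition rhos_down (i j : nat) : seq tvb_gen :=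
  map Rho (rev (iota i.+1 (j - i.+1))).

Definition x_word (k l : nat) : word tvb_gen :=
  if k < l then
    gw (rhos_down k l ++ Sig k :: rev (rhos_down k l))
  else
    gw (rhos_down l k ++ [:: Rho l; Sig l; Rho l] ++ rev (rhos_down l k)).

Inductive tvh_gen := X of nat & nat | G of nat.

Definition tvh_gen_ok (n : nat) (g : tvh_gen) : bool :=
  match g with
  | X k l => [&& 1 <= k <= n, 1 <= l <= n & k != l]
  | G j => (1 <= j) && (j <= n)
  end.

Definition tvh_word_ok (n : nat) (w : word tvh_gen) : bool :=
  all (fun p => tvh_gen_ok n p.1) w.

Definition in1n (n i : nat) : bool := (1 <= i) && (i <= n).

Definition tvh_rel (n : nat) (r s : word tvh_gen) : Prop :=
  (exists i j k l, [/\ [&& in1n n i, in1n n j, in1n n k & in1n n l],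
      uniq [:: i; j; k; l],
      r = gw [:: X i j; X k l] & s = gw [:: X k l; X i j]])
  \/ (exists i j k, [/\ [&& in1n n i, in1n n j & in1n n k],
      uniq [:: i; j; k],
      r = gw [:: X i k; X k j; X i k] & s = gw [:: X k j; X i k; X k j]])
  \/ (exists i, [/\ in1n n i, r = gw [:: G i; G i] & s = [::]])
  \/ (exists i j, [/\ in1n n i && in1n n j, i != j,
      r = gw [:: G i; G j] & s = gw [:: G j; G i]])
  \/ (exists i j k, [/\ [&& in1n n i, in1n n j & in1n n k],
      uniq [:: i; j; k],
      r = gw [:: X i j; G k] & s = gw [:: G k; X i j]])
  \/ (exists i j, [/\ in1n n i && in1n n j, i != j,
      r = gw [:: X i j] & s = gw [:: G i; G j; X j i; G j; G i]]).

Definition tvh_eq (n : nat) := pres_eq (tvh_rel n).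

Definition psi_letter (p : tvh_gen * bool) : word tvb_gen :=
  let w := match p.1 with X k l => x_word k l | G j => gw [:: Gam j] end in
  if p.2 then winv w else w.

Definition psi (w : word tvh_gen) : word tvb_gen := flatten (map psi_letter w).

(* Main.v *)
Require Import Defs.
From mathcomp Require Import all_boot.
From Stdlib Require Import Setoid Morphisms Lia.
From mathcomp Require Import zify.
Set Implicit Arguments. Unset Strict Implicit. Unset Printing Implicit Defensive.

Section PE.
Variables (A : Type) (R : word A -> word A -> Prop).
Local Notation "u ~ v" := (pres_eq R u v) (at level 70).
Local Hint Extern 0 (pres_eq _ _ _) => (simpl; reflexivity) : core.

Lemma pe_ctx u v x y : u ~ v -> x ++ u ++ y ~ x ++ v ++ y.
Proof.
elim=> {u v} [w|u v _ IH|u v w _ IH1 _ IH2|u a b v|u r s v Hr].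
- exact: pe_refl.
- exact: pe_sym.
- exact: pe_trans IH1 IH2.
- by have := pe_free R (x ++ u) a b (v ++ y); rewrite -!catA.
- by have := pe_rel (x ++ u) (v ++ y) Hr; rewrite -!catA.
Qed.

Global Instance pe_equiv : Equivalence (pres_eq R).
Proof. split; [exact: pe_refl|exact: pe_sym|exact: pe_trans]. Qed.

Global Instance pe_cat_m : Proper (pres_eq R ==> pres_eq R ==> pres_eq R) (@cat (A * bool)).
Proof.
move=> u u' Hu v v' Hv. transitivity (u' ++ v).
  by have := pe_ctx [::] v Hu; rewrite /= .
by have := pe_ctx u' [::] Hv; rewrite !cats0.
Qed.

Global Instance pe_cons_m : Proper (eq ==> pres_eq R ==> pres_eq R) (@cons (A * bool)).
Proof. move=> a _ <- v v' Hv. by have := pe_ctx [:: a] [::] Hv; rewrite !cats0. Qed.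

Lemma pe_c a b v : (a, b) :: (a, ~~ b) :: v ~ v.
Proof. exact: (pe_free R [::]). Qed.

Lemma pe_c' a b v : (a, ~~ b) :: (a, b) :: v ~ v.
Proof. by have := pe_c a (~~ b) v; rewrite negbK. Qed.

Lemma pe_r r s v : R r s -> r ++ v ~ s ++ v.
Proof. move=> H; exact: (pe_rel [::] v H). Qed.

Lemma winv_cons (p : A * bool) (w : word A) : winv (p :: w) = winv w ++ [:: (p.1, ~~ p.2)].
Proof. by rewrite /winv /= rev_cons cats1. Qed.

Lemma winv_cat (u w : word A) : winv (u ++ w) = winv w ++ winv u.
Proof. by rewrite /winv map_cat rev_cat. Qed.

Lemma winvK (w : word A) : winv (winv w) = w.
Proof. rewrite /winv map_rev revK -map_comp; elim: w => //= [[a b] w] ->. by rewrite negbK. Qed.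

Lemma winv_r w v : w ++ winv w ++ v ~ v.
Proof.
elim: w v => [|[a b] w IH] v; first by reflexivity.
rewrite winv_cons /= -catA /= IH. exact: pe_c.
Qed.

Lemma winv_l w v : winv w ++ w ++ v ~ v.
Proof. by have := winv_r (winv w) v; rewrite winvK. Qed.

Lemma winv_r0 w : w ++ winv w ~ [::].
Proof. by have := winv_r w [::]; rewrite cats0. Qed.
Lemma winv_l0 w : winv w ++ w ~ [::].
Proof. by have := winv_l w [::]; rewrite cats0. Qed.

Lemma pe_winv u v : u ~ v -> winv u ~ winv v.
Proof.
move=> H. transitivity (winv u ++ (v ++ winv v)); first by rewrite winv_r0 cats0.
transitivity (winv u ++ (u ++ winv v)).
  apply: pe_cat_m; first reflexivity. apply: pe_cat_m; [symmetry; exact: H|reflexivity].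
by rewrite catA winv_l0.
Qed.

Lemma pe_solve a v : a ++ v ~ [::] -> a ~ winv v.
Proof.
move=> H. transitivity (a ++ (v ++ winv v)); first by rewrite winv_r0 cats0.
by rewrite catA H.
Qed.
End PE.
Global Hint Extern 0 (pres_eq _ _ _) => (simpl; reflexivity) : core.

Ltac noif t := match t with context [if _ then _ else _] => fail 1 | _ => idtac end.
Ltac swsolve := rewrite /swap; repeat (match goal with |- context [?x == ?y] =>
   noif x; noif y; let H := fresh "H" in case: (x =P y) => H; rewrite /= end); try lia.

Lemma swapL a b : swap a b a = b. Proof. by rewrite /swap eqxx. Qed.
Lemma swapR a b : swap a b b = a. Proof. by swsolve. Qed.
Lemma swapO a b k : k != a -> k != b -> swap a b k = k.
Proof. by rewrite /swap => /negbTE -> /negbTE ->. Qed.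
Lemma swapK a b k : swap a b (swap a b k) = k. Proof. by swsolve. Qed.

Definition rp (ms : seq nat) : nat -> nat := foldr (fun m f => swap m m.+1 \o f) id ms.

Lemma rp_cat a b x : rp (a ++ b) x = rp a (rp b x).
Proof. by elim: a => //= m a IH; rewrite IH. Qed.

Lemma rp_revK ms x : rp ms (rp (rev ms) x) = x.
Proof.
elim: ms x => //= m ms IH x. by rewrite rev_cons -cats1 rp_cat /= IH swapK.
Qed.

Lemma rp_revK' ms x : rp (rev ms) (rp ms x) = x.
Proof. by have := rp_revK (rev ms) x; rewrite revK. Qed.

Lemma rp_inj ms : injective (rp ms).
Proof. by move=> x y H; rewrite -(rp_revK' ms x) H rp_revK'. Qed.

Lemma rp_iota p q x : x < p -> rp (rev (iota p q)) x = x.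
Proof.
elim: q => [|q IH] lt //. rewrite -addn1 iotaD rev_cat /= IH //. apply: swapO; lia.
Qed.

Lemma rp_iota_p p q : rp (rev (iota p q)) p = p + q.
Proof.
elim: q => [|q IH]; first by rewrite addn0.
rewrite -addn1 iotaD rev_cat /= IH swapL; lia.
Qed.

Lemma phiH_cat a b x : phiH (a ++ b) x = phiH a (phiH b x).
Proof. by elim: a => //= p a IH; rewrite IH. Qed.

Definition gwb (A : Type) (b : bool) (gs : seq A) : word A := map (fun g => (g, b)) gs.

Lemma phiH_rho b ms : phiH (gwb b (map Rho ms)) = rp ms.
Proof. by elim: ms => //= m ms ->. Qed.

Definition actg (f : nat -> nat) (g : tvh_gen) : tvh_gen :=
  match g with X k l => X (f k) (f l) | G j => G (f j) end.
Definition mapw (A B : Type) (f : A -> B) (w : word A) : word B := map (fun p => (f p.1, p.2)) w.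
Definition act f (u : word tvh_gen) := mapw (actg f) u.

Lemma act_cat f u v : act f (u ++ v) = act f u ++ act f v.
Proof. exact: map_cat. Qed.
Lemma act_comp f g u : act f (act g u) = act (f \o g) u.
Proof. rewrite /act /mapw -map_comp; apply: eq_map => [[[k l|j] b]] //. Qed.
Lemma act_id u : act id u = u.
Proof. by elim: u => //= [[[k l|j] b] u] ->. Qed.
Lemma eq_act f g u : f =1 g -> act f u = act g u.
Proof. move=> H; apply: eq_map => [[[k l|j] b]] /=; by rewrite !H. Qed.

Lemma pe_map (A B : Type) (R : word A -> word A -> Prop) (R' : word B -> word B -> Prop) (f : A -> B) :
  (forall r s, R r s -> R' (mapw f r) (mapw f s)) ->
  forall u v, pres_eq R u v -> pres_eq R' (mapw f u) (mapw f v).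
Proof.
move=> HR u v; elim=> {u v} [w|u v _ IH|u v w _ IH1 _ IH2|u a b v|u r s v Hr].
- reflexivity.
- by symmetry.
- by transitivity (mapw f v).
- rewrite /mapw !map_cat /=. exact: pe_free.
- rewrite /mapw !map_cat. exact: pe_rel (HR _ _ Hr).
Qed.

Definition pmul (a b : word tvh_gen * (nat -> nat)) : word tvh_gen * (nat -> nat) :=
  (a.1 ++ act a.2 b.1, a.2 \o b.2).

Lemma pmulA a b c : pmul a (pmul b c) = pmul (pmul a b) c.
Proof. by rewrite /pmul /= act_cat act_comp catA. Qed.
Lemma pmul1 a : pmul ([::], id) a = a.
Proof. by case: a => u f; rewrite /pmul /= act_id. Qed.

Definition Phl n (p : tvb_gen * bool) : word tvh_gen * (nat -> nat) :=
  if tvb_gen_ok n p.1 then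
    match p.1 with
    | Sig i => ([:: (X i i.+1, p.2)], id)
    | Rho i => ([::], swap i i.+1)
    | Gam j => ([:: (G j, p.2)], id)
    end
  else ([::], id).
Definition Ph n (w : word tvb_gen) := foldr (fun p acc => pmul (Phl n p) acc) ([::], id) w.

Lemma Ph_cat n u v : Ph n (u ++ v) = pmul (Ph n u) (Ph n v).
Proof. elim: u => [|p u IH] /=; first by rewrite pmul1. by rewrite IH pmulA. Qed.

Definition goodp n (f : nat -> nat) :=
  (forall k, in1n n k -> in1n n (f k)) /\
  (forall a b, in1n n a -> in1n n b -> f a = f b -> a = b).

Lemma good_id n : goodp n id. Proof. by split. Qed.
Lemma good_comp n f g : goodp n f -> goodp n g -> goodp n (f \o g).
Proof.
move=> [f1 f2] [g1 g2]; split=> [k hk|a b ha hb /= e]; first by apply: f1; apply: g1.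
by apply: g2 => //; apply: f2 => //; apply: g1.
Qed.
Lemma good_swap n i : 1 <= i <= n - 1 -> goodp n (swap i i.+1).
Proof.
move=> hi; split=> [k|a b]; rewrite /in1n; first by move=> hk; swsolve.
move=> ha hb e. by rewrite -(swapK i i.+1 a) e swapK.
Qed.

Lemma good_Phl n p : goodp n (Phl n p).2.
Proof.
rewrite /Phl; case: p => [[i|i|j] b] /=; case: ifP => h //=; try exact: good_id.
exact: good_swap.
Qed.

Lemma good_Ph n w : goodp n (Ph n w).2.
Proof. elim: w => [|p w IH] /=; [exact: good_id | exact: good_comp (good_Phl n p) IH]. Qed.

Lemma uniq_good n f (s : seq nat) : goodp n f -> all (in1n n) s -> uniq s -> uniq (map f s).
Proof.
move=> [_ hf] ha hu. rewrite map_inj_in_uniq //.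
move=> x y hx hy; apply: hf; [exact: (allP ha) | exact: (allP ha)].
Qed.

Lemma act_rel n f r s : goodp n f -> tvh_rel n r s -> tvh_rel n (act f r) (act f s).
Proof.
move=> gf; have [g1 _] := gf.
have U := uniq_good gf.
case=> [[i [j [k [l [h u -> ->]]]]]|[[i [j [k [h u -> ->]]]]|[[i [h -> ->]]|[[i [j [h u -> ->]]]|[[i [j [k [h u -> ->]]]]|[i [j [h u -> ->]]]]]]]].
- left; exists (f i), (f j), (f k), (f l); split => //.
  + move: h => /and4P [hi hj hk hl]; by rewrite !g1.
  + by have := U [:: i; j; k; l]; apply => //=; move: h => /and4P [-> -> -> ->].
- right; left; exists (f i), (f j), (f k); split => //.
  + move: h => /and3P [hi hj hk]; by rewrite !g1.
  + by have := U [:: i; j; k]; apply => //=; move: h => /and3P [-> -> ->].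
- right; right; left; exists (f i); split => //. exact: g1.
- right; right; right; left; exists (f i), (f j); split => //.
  + move: h => /andP [hi hj]; by rewrite !g1.
  + move: h => /andP [hi hj].
    by have := U [:: i; j]; rewrite /= !andbT !inE; apply => //=; rewrite hi hj.
- right; right; right; right; left; exists (f i), (f j), (f k); split => //.
  + move: h => /and3P [hi hj hk]; by rewrite !g1.
  + by have := U [:: i; j; k]; apply => //=; move: h => /and3P [-> -> ->].
- right; right; right; right; right; exists (f i), (f j); split => //.
  + move: h => /andP [hi hj]; by rewrite !g1.
  + move: h => /andP [hi hj].
    by have := U [:: i; j]; rewrite /= !andbT !inE; apply => //=; rewrite hi hj.
Qed.

Lemma tvh_act n f u v : goodp n f -> tvh_eq n u v -> tvh_eq n (act f u) (act f v).
Proof. move=> gf; apply: pe_map => r s; exact: act_rel. Qed.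

Definition E n (a b : word tvh_gen * (nat -> nat)) := tvh_eq n a.1 b.1 /\ a.2 =1 b.2.

Lemma E_refl n a : E n a a. Proof. by split. Qed.
Lemma E_sym n a b : E n a b -> E n b a.
Proof. case=> h1 h2; split; [by symmetry | by move=> x; rewrite h2]. Qed.
Lemma E_trans n a b c : E n a b -> E n b c -> E n a c.
Proof. case=> h1 h2 [h3 h4]; split; [by transitivity b.1| by move=> x; rewrite h2 h4]. Qed.

Lemma E_left n U a b : goodp n U.2 -> E n a b -> E n (pmul U a) (pmul U b).
Proof.
move=> g [h1 h2]; split => /=; last by move=> x /=; rewrite h2.
apply: pe_cat_m; first reflexivity. exact: tvh_act.
Qed.

Lemma E_right n a b V : E n a b -> E n (pmul a V) (pmul b V).
Proof.
move=> [h1 h2]; split => /=; last by move=> x /=; rewrite h2.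
rewrite (eq_act _ h2). by apply: pe_cat_m.
Qed.

Lemma pe_rel0 (A : Type) (R : word A -> word A -> Prop) r s : R r s -> pres_eq R r s.
Proof. by move=> H; have := pe_rel [::] [::] H; rewrite /= !cats0. Qed.

Ltac swsimp := repeat match goal with |- context [swap ?a ?b ?k] =>
  first [rewrite (swapL a b) | rewrite (swapR a b) | rewrite (@swapO a b k); [|lia|lia]] end.

Ltac ifs := repeat (rewrite ifT; last by lia).

Lemma E_free n a b : E n (pmul (Phl n (a, b)) (Phl n (a, ~~ b))) ([::], id).
Proof.
rewrite /Phl /=; case: a => [i|i|j] /=; case: ifP => _ /=; split => //=;
  try (by move=> x /=; rewrite ?swapK); exact: (pe_c _ _ _ [::]).
Qed.

Lemma E_rel n r s : tvb_rel n r s -> E n (Ph n r) (Ph n s).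
Proof.
move=> H.
destruct H as [H|[H|[H|[H|[H|[H|[H|[H|[H|[H|[H|[H|H]]]]]]]]]]]].
- case: H => i [h1 h2 -> ->]; rewrite /Ph /Phl /=; ifs; split => //=.
  apply: pe_rel0; right; left; exists i, i.+2, i.+1; split => //; rewrite /in1n /= ?inE; lia.
- case: H => i [j [h1 h2 hf -> ->]]; rewrite /Ph /Phl /=; ifs; split => //=.
  apply: pe_rel0; left; exists i, i.+1, j, j.+1; split => //; rewrite /in1n /= ?inE; move: hf; rewrite /far; lia.
- case: H => i [h1 -> ->]; rewrite /Ph /Phl /=; ifs; split => //= x /=; by rewrite swapK.
- case: H => i [j [h1 h2 hf -> ->]]; rewrite /Ph /Phl /=; ifs; split => //= x /=; move: hf; rewrite /far; swsolve.
- case: H => i [h1 h2 -> ->]; rewrite /Ph /Phl /=; ifs; split => //= x /=; swsolve.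
- case: H => i [j [h1 h2 hf -> ->]]; rewrite /Ph /Phl /=; ifs; split => //=.
  move: hf; rewrite /far => hf; swsimp; reflexivity.
- case: H => i [h1 h2 -> ->]; rewrite /Ph /Phl /=; ifs; split => //=; try (move=> x /=; swsolve; fail).
  swsimp; reflexivity.
- case: H => i [h1 -> ->]; rewrite /Ph /Phl /=; ifs; split => //=.
  apply: pe_rel0; right; right; left; exists i; split => //.
- case: H => i [j [h1 h2 -> ->]]; rewrite /Ph /Phl /=; ifs; split => //=.
  case: (i =P j) => [->|ne]; first reflexivity.
  apply: pe_rel0; right; right; right; left; exists i, j; split => //; [rewrite /in1n; lia| by apply/eqP].
- case: H => i [j [h1 h2 hj -> ->]]; rewrite /Ph /Phl /=; ifs; split => //=.
  swsimp; reflexivity.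
- case: H => i [j [h1 h2 hj -> ->]]; rewrite /Ph /Phl /=; ifs; split => //=.
  apply: pe_sym; apply: pe_rel0; right; right; right; right; left; exists i, i.+1, j; split => //;
   rewrite /in1n /= ?inE; lia.
- case: H => i [h1 -> ->]; rewrite /Ph /Phl /=; ifs; split => //=.
  swsimp; reflexivity.
- case: H => i [h1 -> ->]; rewrite /Ph /Phl /=; ifs; split => //=.
  swsimp. apply: pe_rel0; right; right; right; right; right; exists i.+1, i; split => //; rewrite /in1n; lia.
  by move=> x /=; rewrite swapK.
Qed.

Lemma E_main n w w' : tvb_eq n w w' -> E n (Ph n w) (Ph n w').
Proof.
elim=> {w w'} [w|u v _ IH|u v w _ IH1 _ IH2|u a b v|u r s v Hr].
- exact: E_refl.
- exact: E_sym.
- exact: E_trans IH1 IH2.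
- rewrite !Ph_cat /=. apply: E_left; first exact: good_Ph.
  rewrite pmulA -[X in E n _ X]pmul1. apply: E_right. exact: E_free.
- rewrite !Ph_cat. apply: E_left; first exact: good_Ph. apply: E_right. exact: E_rel.
Qed.

Definition xms (k l : nat) : seq nat :=
  if k < l then rev (iota k.+1 (l - k.+1)) else rcons (rev (iota l.+1 (k - l.+1))) l.
Definition xseq (k l : nat) : seq tvb_gen :=
  map Rho (xms k l) ++ Sig (minn k l) :: map Rho (rev (xms k l)).

Lemma x_word_eq k l : x_word k l = gw (xseq k l).
Proof.
rewrite /x_word /xseq /xms /rhos_down; case: ltnP => h; first by rewrite !map_rev !revK.
by rewrite rev_rcons map_rcons -cats1 -catA /= !map_rev !revK.
Qed.

Lemma winv_gwb b (s : seq tvb_gen) : winv (gwb b s) = gwb (~~ b) (rev s).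
Proof. by rewrite /winv /gwb -map_comp map_rev. Qed.

Lemma rev_xseq k l : rev (xseq k l) = xseq k l.
Proof.
rewrite /xseq rev_cat rev_cons -map_rev revK.
by rewrite -cats1 -catA map_rev.
Qed.

Definition gseq (g : tvh_gen) : seq tvb_gen :=
  match g with X k l => xseq k l | G j => [:: Gam j] end.

Lemma psi_letterE p : psi_letter p = gwb p.2 (gseq p.1).
Proof.
case: p => [[k l|j] [|]]; rewrite /psi_letter /= ?x_word_eq //.
by have := winv_gwb false (xseq k l); rewrite rev_xseq.
Qed.

Lemma psi_cat u v : psi (u ++ v) = psi u ++ psi v.
Proof. by rewrite /psi map_cat flatten_cat. Qed.

Definition rngb n i := (1 <= i) && (i <= n - 1).

Lemma Ph_rho n b ms : all (rngb n) ms -> Ph n (gwb b (map Rho ms)) = ([::], rp ms).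
Proof.
elim: ms => //= m ms IH /andP [hm hms]. rewrite IH // /Phl /=; rewrite /rngb in hm; by rewrite hm.
Qed.

Lemma xms_rng n k l : in1n n k -> in1n n l -> k != l -> all (rngb n) (xms k l).
Proof.
rewrite /in1n /xms => hk hl ne; case: ltnP => h; apply/allP => x.
  rewrite mem_rev mem_iota /rngb; lia.
rewrite mem_rcons inE mem_rev mem_iota /rngb; lia.
Qed.

Lemma rp_xms k l : k != l -> rp (xms k l) (minn k l) = k /\ rp (xms k l) (minn k l).+1 = l.
Proof.
rewrite /xms => ne; case: ltnP => h.
  rewrite rp_iota_p rp_iota //; split => //; lia.
rewrite -cats1 !rp_cat /= swapL swapR rp_iota_p rp_iota //; split => //; lia.
Qed.

Lemma phiH_gwb_rho b ms : phiH (gwb b (map Rho ms)) = rp ms.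
Proof. by elim: ms => //= m ms ->. Qed.

Lemma phiH_psil p x : phiH (gwb p.2 (gseq p.1)) x = x.
Proof.
case: p => [[k l|j] b] //=. rewrite /xseq /gwb map_cat phiH_cat /=.
rewrite -/(gwb b _) phiH_gwb_rho -/(gwb b _) phiH_gwb_rho.
by rewrite rp_revK.
Qed.

Lemma phiH_psi u x : phiH (psi u) x = x.
Proof.
elim: u x => //= p u IH x. rewrite phiH_cat psi_letterE IH. exact: phiH_psil.
Qed.

Lemma Ph_psil n p : tvh_gen_ok n p.1 ->
  (Ph n (gwb p.2 (gseq p.1))).1 = [:: p] /\ (Ph n (gwb p.2 (gseq p.1))).2 =1 id.
Proof.
case: p => [[k l|j] b] /=.
- move=> /and3P [hk hl ne].
  have R := xms_rng hk hl ne. have [e1 e2] := rp_xms ne.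
  rewrite /xseq /gwb map_cat Ph_cat /= -/(gwb b _) Ph_rho // -/(gwb b _) Ph_rho;
    last by rewrite all_rev.
  rewrite /Phl /=. have -> : (1 <= minn k l) && (minn k l <= n - 1).
    move: hk hl ne; rewrite /in1n; lia.
  rewrite /= e1 e2; split => // x /=. exact: rp_revK.
- move=> hj. by rewrite /Ph /Phl /= hj.
Qed.

Lemma Ph_psi n u : tvh_word_ok n u -> (Ph n (psi u)).1 = u /\ (Ph n (psi u)).2 =1 id.
Proof.
elim: u => //= p u IH /andP [hp hu]. have [IH1 IH2] := IH hu.
rewrite Ph_cat psi_letterE. have [e1 e2] := Ph_psil hp.
rewrite /pmul /= e1 IH1 (eq_act _ e2) act_id; split => // x /=. by rewrite e2 IH2.
Qed.

Lemma tvb_to_tvh n u v : tvh_word_ok n u -> tvh_word_ok n v ->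
  tvb_eq n (psi u) (psi v) -> tvh_eq n u v.
Proof.
move=> hu hv H. have [H1 _] := E_main H.
by rewrite (Ph_psi hu).1 (Ph_psi hv).1 in H1.
Qed.

Notation sg i := (Sig i, false).
Notation rh i := (Rho i, false).
Notation gm i := (Gam i, false).
Definition farb i m := (i + 2 <= m) || (m + 2 <= i).

Section TVB.
Variable n : nat.
Hypothesis hn : 2 <= n.
Local Notation "u ~ v" := (tvb_eq n u v) (at level 70).
Local Notation rng := (rngb n).
Local Hint Extern 0 (pres_eq _ _ _) => (simpl; reflexivity) : core.

Lemma trel r s v : tvb_rel n r s -> r ++ v ~ s ++ v.
Proof. exact: pe_r. Qed.

Lemma R_rr i v : rng i -> rh i :: rh i :: v ~ v.
Proof.
move=> h; apply: (trel (r := [:: rh i; rh i]) (s := [::])).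
do 2 right; left; exists i; split => //.
Qed.

Lemma R_rinv i v : rng i -> (Rho i, true) :: v ~ rh i :: v.
Proof.
move=> h. transitivity ((Rho i, true) :: rh i :: rh i :: v); first by rewrite R_rr.
exact: (pe_c' _ (Rho i) false).
Qed.

Lemma R_gg j v : in1n n j -> gm j :: gm j :: v ~ v.
Proof.
move=> h; apply: (trel (r := [:: gm j; gm j]) (s := [::])).
do 7 right; left; exists j; split => //.
Qed.

Lemma R_ginv j v : in1n n j -> (Gam j, true) :: v ~ gm j :: v.
Proof.
move=> h. transitivity ((Gam j, true) :: gm j :: gm j :: v); first by rewrite R_gg.
exact: (pe_c' _ (Gam j) false).
Qed.

Lemma R_gcomm i j v : in1n n i -> in1n n j -> gm i :: gm j :: v ~ gm j :: gm i :: v.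
Proof.
move=> hi hj; apply: (trel (r := [:: gm i; gm j]) (s := [:: gm j; gm i])).
do 8 right; left; exists i, j; split => //.
Qed.

Lemma R_rfar i j v : rng i -> rng j -> farb i j -> rh i :: rh j :: v ~ rh j :: rh i :: v.
Proof.
move=> hi hj hf; apply: (trel (r := [:: rh i; rh j]) (s := [:: rh j; rh i])).
do 3 right; left; exists i, j; split => //; rewrite /far; move: hf; rewrite /farb; lia.
Qed.

Lemma R_rbraid i v : 1 <= i -> i <= n - 2 ->
  rh i :: rh i.+1 :: rh i :: v ~ rh i.+1 :: rh i :: rh i.+1 :: v.
Proof.
move=> h1 h2; apply: (trel (r := [:: rh i; rh i.+1; rh i]) (s := [:: rh i.+1; rh i; rh i.+1])).
do 4 right; left; exists i; split => //.
Qed.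

Lemma R_sbraid i v : 1 <= i -> i <= n - 2 ->
  sg i :: sg i.+1 :: sg i :: v ~ sg i.+1 :: sg i :: sg i.+1 :: v.
Proof.
move=> h1 h2; apply: (trel (r := [:: sg i; sg i.+1; sg i]) (s := [:: sg i.+1; sg i; sg i.+1])).
left; exists i; split => //.
Qed.

Lemma R_sfar i j v : rng i -> rng j -> farb i j -> sg i :: sg j :: v ~ sg j :: sg i :: v.
Proof.
move=> hi hj hf; apply: (trel (r := [:: sg i; sg j]) (s := [:: sg j; sg i])).
right; left; exists i, j; split => //; rewrite /far; move: hf; rewrite /farb; lia.
Qed.

Lemma R_srfar i j v : rng i -> rng j -> farb i j -> sg i :: rh j :: v ~ rh j :: sg i :: v.
Proof.
move=> hi hj hf; apply: (trel (r := [:: sg i; rh j]) (s := [:: rh j; sg i])).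
do 5 right; left; exists i, j; split => //; rewrite /far; move: hf; rewrite /farb; lia.
Qed.

Lemma R_rrs i v : 1 <= i -> i <= n - 2 ->
  rh i :: rh i.+1 :: sg i :: v ~ sg i.+1 :: rh i :: rh i.+1 :: v.
Proof.
move=> h1 h2; apply: (trel (r := [:: rh i; rh i.+1; sg i]) (s := [:: sg i.+1; rh i; rh i.+1])).
do 6 right; left; exists i; split => //.
Qed.

Lemma R_gr j i v : rng i -> in1n n j -> (j != i) && (j != i.+1) ->
  gm j :: rh i :: v ~ rh i :: gm j :: v.
Proof.
move=> hi hj hji; apply: (trel (r := [:: gm j; rh i]) (s := [:: rh i; gm j])).
do 9 right; left; exists i, j; split => //.
Qed.

Lemma R_gs j i v : rng i -> in1n n j -> (j != i) && (j != i.+1) ->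
  gm j :: sg i :: v ~ sg i :: gm j :: v.
Proof.
move=> hi hj hji; apply: (trel (r := [:: gm j; sg i]) (s := [:: sg i; gm j])).
do 10 right; left; exists i, j; split => //.
Qed.

Lemma R_rg i v : rng i -> rh i :: gm i :: v ~ gm i.+1 :: rh i :: v.
Proof.
move=> hi; apply: (trel (r := [:: rh i; gm i]) (s := [:: gm i.+1; rh i])).
do 11 right; left; exists i; split => //.
Qed.

Lemma R_rsr i v : rng i ->
  rh i :: sg i :: rh i :: v ~ gm i.+1 :: gm i :: sg i :: gm i :: gm i.+1 :: v.
Proof.
move=> hi; apply: (trel (r := [:: rh i; sg i; rh i]) (s := [:: gm i.+1; gm i; sg i; gm i; gm i.+1])).
do 12 right; exists i; split => //.
Qed.

End TVB.

Definition xw k l := gw (xseq k l).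
Definition farg m (g : tvb_gen) n :=
  match g with Sig i | Rho i => rngb n i && farb m i | Gam _ => false end.

Lemma xms_S k l : k < l -> xms k l.+1 = l :: xms k l.
Proof.
move=> h; rewrite /xms ltnS (ltnW h) h.
have -> : l.+1 - k.+1 = (l - k.+1) + 1 by lia.
rewrite iotaD rev_cat /=. congr (_ :: _); lia.
Qed.

Lemma xms_Sl k l : l < k -> xms k.+1 l = k :: xms k l.
Proof.
move=> h; rewrite /xms.
have -> : (k.+1 < l) = false by lia.
have -> : (k < l) = false by lia.
have -> : k.+1 - l.+1 = (k - l.+1) + 1 by lia.
rewrite iotaD rev_cat /=. congr (rcons (_ :: _) _); lia.
Qed.

Lemma xw_S k l : k < l -> xw k l.+1 = rh l :: xw k l ++ [:: rh l].
Proof.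
move=> h; rewrite /xw /xseq xms_S //= rev_cons map_rcons -cats1.
have -> : minn k l.+1 = minn k l by lia.
by rewrite /gw !map_cat /= !map_cat -!catA.
Qed.

Lemma xw_Sl k l : l < k -> xw k.+1 l = rh k :: xw k l ++ [:: rh k].
Proof.
move=> h; rewrite /xw /xseq xms_Sl //= rev_cons map_rcons -cats1.
have -> : minn k.+1 l = minn k l by lia.
by rewrite /gw !map_cat /= !map_cat -!catA.
Qed.

Lemma xw_12 k : xw k k.+1 = [:: sg k].
Proof. rewrite /xw /xseq /xms ltnSn subnn /=. by have -> : minn k k.+1 = k by lia. Qed.

Lemma xw_21 k : xw k.+1 k = [:: rh k; sg k; rh k].
Proof.
rewrite /xw /xseq /xms ltnNge leqnSn /= subnn /=. by have -> : minn k.+1 k = k by lia.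
Qed.

Lemma xms_mem_lt k l x : k < l -> x \in xms k l -> k < x < l.
Proof. rewrite /xms => h; rewrite h mem_rev mem_iota; lia. Qed.

Lemma xms_mem_gt k l x : l < k -> x \in xms k l -> l <= x < k.
Proof.
rewrite /xms => h; have -> : (k < l) = false by lia.
rewrite mem_rcons inE mem_rev mem_iota; lia.
Qed.

Lemma all_farg n m k l : (forall x, x \in xms k l -> rngb n x && farb m x) ->
  rngb n (minn k l) && farb m (minn k l) -> all (fun g => farg m g n) (xseq k l).
Proof.
move=> H1 H2. rewrite /xseq all_cat /= !all_map H2 /=.
apply/andP; split; apply/allP => x hx /=; apply: H1 => //. by rewrite -mem_rev.
Qed.

Lemma x_word_xw k l : x_word k l = xw k l. Proof. exact: x_word_eq. Qed.

Section TVB2.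
Variable n : nat.
Hypothesis hn : 2 <= n.
Local Notation "u ~ v" := (tvb_eq n u v) (at level 70).
Local Notation rng := (rngb n).
Local Hint Extern 0 (pres_eq _ _ _) => (simpl; reflexivity) : core.

Lemma rg_conj m j v : rng m -> in1n n j -> rh m :: gm j :: v ~ gm (swap m m.+1 j) :: rh m :: v.
Proof.
move=> hm hj.
case: (j =P m) => [->|ne1]; first by rewrite swapL R_rg.
case: (j =P m.+1) => [->|ne2].
  rewrite swapR. symmetry.
  transitivity (rh m :: rh m :: gm m :: rh m :: v); first by rewrite R_rr.
  by rewrite R_rg // R_rr.
rewrite swapO; [|apply/eqP => //|apply/eqP => //].
symmetry; apply: R_gr => //; apply/andP; split; apply/eqP => //.
Qed.

Lemma rg_conj' m j v : rng m -> in1n n j -> gm j :: rh m :: v ~ rh m :: gm (swap m m.+1 j) :: v.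
Proof.
move=> hm hj. have hj' : in1n n (swap m m.+1 j) by apply: (good_swap hm).1.
by rewrite rg_conj // swapK.
Qed.

Lemma far_comm m L v : rng m -> all (fun g => farg m g n) L -> rh m :: gw L ++ v ~ gw L ++ rh m :: v.
Proof.
move=> hm; elim: L => [|g L IH] /=; first by move=> _.
move=> /andP [hg hL]. rewrite -IH //.
case: g hg => [i|i|j] //= /andP [hi hf].
- symmetry; apply: R_srfar => //; move: hf; rewrite /farb; lia.
- exact: R_rfar.
Qed.

Lemma rr_back m w v : rng m -> w ++ rh m :: rh m :: v ~ w ++ v.
Proof. by move=> hm; rewrite R_rr. Qed.

Lemma cjA m k l v : rng m -> in1n n k -> in1n n l -> k < l -> (m.+2 <= k) || (l.+1 <= m) ->
  rh m :: xw k l ++ rh m :: v ~ xw k l ++ v.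
Proof.
move=> hm hk hl hkl hf. rewrite /xw far_comm ?R_rr //.
apply: all_farg.
  move=> x /(xms_mem_lt hkl) hx; move: hm hk hl hf; rewrite /rngb /in1n /farb; lia.
have -> : minn k l = k by lia.
move: hm hk hl hf; rewrite /rngb /in1n /farb; lia.
Qed.

Lemma cjC m k v : rng m -> k < m -> rh m :: xw k m.+1 ++ rh m :: v ~ xw k m ++ v.
Proof. move=> hm h; rewrite xw_S // /= -catA /= R_rr //. by rewrite R_rr. Qed.

Lemma cjE k l v : 1 <= k -> k.+2 <= l -> l <= n ->
  rh k :: xw k l ++ rh k :: v ~ xw k.+1 l ++ v.
Proof.
move=> h1; elim: l v => // l IH v h2 h3.
case: (ltnP l k.+2) => h4.
  have -> : l = k.+1 by lia.
  rewrite xw_S // xw_12 xw_12 /= R_rrs; try lia.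
  by rewrite R_rr ?R_rr //; rewrite /rngb; lia.
rewrite xw_S; last by lia. rewrite xw_S; last by lia. rewrite /= -!catA /=.
rewrite R_rfar; try (rewrite /rngb /farb; lia).
rewrite (@R_rfar n hn l k v); try (rewrite /rngb /farb; lia).
rewrite IH //; lia.
Qed.

Lemma cjF j l v : 1 <= j -> j.+1 < l -> l <= n ->
  rh j :: xw j.+1 l ++ rh j :: v ~ xw j l ++ v.
Proof.
move=> h1 h2 h3. have hj : rng j by rewrite /rngb; lia.
transitivity (rh j :: rh j :: xw j l ++ rh j :: rh j :: v); last by rewrite R_rr // R_rr.
by rewrite cjE.
Qed.

Lemma cjG m k l v : 1 <= k -> k < m -> m.+1 < l -> l <= n ->
  rh m :: xw k l ++ rh m :: v ~ xw k l ++ v.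
Proof.
move=> h1 h2; elim: l v => // l IH v h3 h4.
have hm : rng m by rewrite /rngb; lia.
have hm1 : rng m.+1 by rewrite /rngb; lia.
case: (ltnP m.+1 l) => h5; last first.
  have -> : l = m.+1 by lia.
  rewrite xw_S; last by lia. rewrite xw_S; last by lia. rewrite /= -!catA /=.
  rewrite R_rbraid; try lia.
  rewrite far_comm //; last first.
    apply: all_farg.
      move=> x /(xms_mem_lt h2) hx; rewrite /rngb /farb; lia.
    have -> : minn k m = k by lia. rewrite /rngb /farb; lia.
  rewrite -R_rbraid; try lia. by rewrite R_rr.
rewrite xw_S; last by lia. rewrite /= -!catA /=.
have hl : rng l by rewrite /rngb; lia.
rewrite R_rfar //; last by rewrite /farb; lia.
rewrite (@R_rfar n hn l m v) //; last by rewrite /farb; lia.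
rewrite IH //; lia.
Qed.

Lemma conj_lt m k l v : rng m -> in1n n k -> in1n n l -> k < l ->
  rh m :: xw k l ++ rh m :: v ~ xw (swap m m.+1 k) (swap m m.+1 l) ++ v.
Proof.
move=> hm hk hl hkl. move: (hm) (hk) (hl); rewrite /rngb /in1n => hm' hk' hl'.
case H1: ((m.+2 <= k) || (l.+1 <= m)).
  rewrite cjA // !swapO //; apply/eqP; lia.
case H2: (m.+1 == k).
  move/eqP: H2 => H2; subst k. rewrite swapR (@swapO m m.+1 l); try (apply/eqP; lia).
  apply: cjF; lia.
case H3: (m == k).
  move/eqP: H3 => H3; subst k. rewrite swapL.
  case H4: (l == m.+1).
    move/eqP: H4 => ->. by rewrite swapR xw_12 xw_21.
  rewrite swapO; try (apply/eqP; lia). apply: cjE; lia.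
case H4: (m.+1 < l).
  rewrite cjG ?swapO //; try (apply/eqP; lia); lia.
case H5: (m.+1 == l).
  move/eqP: H5 => H5; subst l. rewrite swapR swapO; try (apply/eqP; lia).
  apply: cjC => //; lia.
have -> : l = m by lia.
rewrite swapL swapO; try (apply/eqP; lia). rewrite xw_S /=; [by rewrite -catA | lia].
Qed.

End TVB2.

Lemma good_rp n R : all (rngb n) R -> goodp n (rp R).
Proof.
elim: R => [|m R IH] /=; first by move=> _; exact: good_id.
move=> /andP [hm hR]. exact: good_comp (good_swap hm) (IH hR).
Qed.

Lemma ok_act n f u : goodp n f -> tvh_word_ok n u -> tvh_word_ok n (act f u).
Proof.
move=> [g1 g2]; elim: u => //= [[[k l|j] b] u IH] /= /andP [hp hu]; rewrite IH // andbT.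
  move: hp => /and3P [hk hl ne].
  have /andP [-> ->] := g1 _ hk. have /andP [-> ->] := g1 _ hl. rewrite /=.
  apply/eqP => e. by move/eqP: ne; apply; apply: g2.
exact: (g1 _ hp).
Qed.

Section TVB3.
Variable n : nat.
Hypothesis hn : 2 <= n.
Local Notation "u ~ v" := (tvb_eq n u v) (at level 70).
Local Notation rng := (rngb n).
Local Hint Extern 0 (pres_eq _ _ _) => (simpl; reflexivity) : core.

Lemma gg_cancel a b w : in1n n a -> in1n n b -> gm a :: gm b :: gm b :: gm a :: w ~ w.
Proof. by move=> ha hb; rewrite R_gg // R_gg. Qed.

Lemma gamma_x k l v : 1 <= k -> k < l -> l <= n ->
  xw l k ++ v ~ gm l :: gm k :: xw k l ++ gm k :: gm l :: v.
Proof.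
move=> h1; elim: l v => // l IH v h2 h3.
case: (ltnP k l) => h4; last first.
  have -> : l = k by lia.
  rewrite xw_21 xw_12 /=. apply: R_rsr; rewrite /rngb; lia.
rewrite xw_Sl // xw_S // /= -!catA /= IH //; last by lia.
have hl : rng l by rewrite /rngb; lia.
have hl' : in1n n l by rewrite /in1n; lia.
have hk' : in1n n k by rewrite /in1n; lia.
rewrite (rg_conj' (m:=l) (j:=l) v) // swapL.
rewrite (rg_conj' (m:=l) (j:=k) (gm l.+1 :: v)) // (@swapO l l.+1 k); try (apply/eqP; lia).
rewrite (rg_conj (m:=l) (j:=l)) // swapL.
rewrite (rg_conj (m:=l) (j:=k)) // (@swapO l l.+1 k) //; apply/eqP; lia.
Qed.

Lemma conj_gt m k l v : rng m -> in1n n k -> in1n n l -> l < k ->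
  rh m :: xw k l ++ rh m :: v ~ xw (swap m m.+1 k) (swap m m.+1 l) ++ v.
Proof.
move=> hm hk hl hlk. have [g1 g2] := good_swap hm.
have hk' := g1 _ hk. have hl' := g1 _ hl.
rewrite gamma_x //; try (move: hk hl; rewrite /in1n; lia).
rewrite (rg_conj (m:=m) (j:=k)) // (rg_conj (m:=m) (j:=l)) //.
rewrite (rg_conj' (m:=m) (j:=k) v) // (rg_conj' (m:=m) (j:=l)) //.
rewrite conj_lt //.
set sk := swap m m.+1 k; set sl := swap m m.+1 l.
have ne : sk != sl.
  apply/eqP => e; have := g2 _ _ hk hl e; lia.
case: (ltnP sl sk) => h.
  symmetry; rewrite gamma_x //; move: hk' hl'; rewrite /in1n; lia.
have h' : sk < sl by rewrite ltn_neqAle ne.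
by rewrite gamma_x // ?gg_cancel //; move: hk' hl'; rewrite /in1n; lia.
Qed.

Lemma conj_x m k l v : rng m -> in1n n k -> in1n n l -> k != l ->
  rh m :: xw k l ++ rh m :: v ~ xw (swap m m.+1 k) (swap m m.+1 l) ++ v.
Proof.
move=> hm hk hl ne; case: (ltnP k l) => h; first exact: conj_lt.
apply: conj_gt => //. by rewrite ltn_neqAle h eq_sym ne.
Qed.

Lemma winv_sand m w : winv (rh m :: w ++ [:: rh m]) = (Rho m, true) :: winv w ++ [:: (Rho m, true)].
Proof. by rewrite winv_cons winv_cat /=. Qed.

Lemma conj_letter m p v : rng m -> tvh_gen_ok n p.1 ->
  rh m :: psi_letter p ++ v ~ psi_letter (actg (swap m m.+1) p.1, p.2) ++ rh m :: v.
Proof.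
move=> hm. have [g1 _] := good_swap hm.
case: p => [[k l|j] b] /=.
- move=> /and3P [hk hl ne].
  have H : forall v, rh m :: xw k l ++ rh m :: v ~ xw (swap m m.+1 k) (swap m m.+1 l) ++ v.
    by move=> v'; apply: conj_x.
  rewrite /psi_letter /= !x_word_xw. case: b.
  + have := H [::]; rewrite cats0 => /(pe_winv (R := tvb_rel n)); rewrite winv_sand.
    rewrite R_rinv // R_rinv // => H2.
    transitivity (rh m :: winv (xw k l) ++ rh m :: rh m :: v); first by rewrite R_rr.
    by rewrite -H2 /= -catA.
  + transitivity (rh m :: xw k l ++ rh m :: rh m :: v); first by rewrite R_rr.
    by rewrite H.
- move=> hj. have hj' := g1 _ hj. rewrite /psi_letter /=. case: b => /=.
  + rewrite !R_ginv //. exact: rg_conj.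
  + exact: rg_conj.
Qed.

Lemma conj_psi m u v : rng m -> tvh_word_ok n u ->
  rh m :: psi u ++ v ~ psi (act (swap m m.+1) u) ++ rh m :: v.
Proof.
move=> hm; elim: u v => [|p u IH] v /=; first by move=> _.
move=> /andP [hp hu]. rewrite -!catA conj_letter //. by rewrite IH.
Qed.

Lemma conj_R R u v : all rng R -> tvh_word_ok n u ->
  gw (map Rho R) ++ psi u ++ v ~ psi (act (rp R) u) ++ gw (map Rho R) ++ v.
Proof.
elim: R v => [|m R IH] v /=; first by move=> _ _; rewrite act_id.
move=> /andP [hm hR] hu. rewrite IH // conj_psi //; last by apply: ok_act => //; exact: good_rp.
by rewrite act_comp.
Qed.

End TVB3.

Definition cseq m k := rev (iota k (m.+1 - k)).

Lemma cseq_top m : cseq m m.+1 = [::].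
Proof. by rewrite /cseq subnn. Qed.

Lemma cseq_split m k : k <= m -> cseq m k = cseq m k.+1 ++ [:: k].
Proof.
move=> h; rewrite /cseq. have -> : m.+1 - k = (m.+1 - k.+1).+1 by lia.
by rewrite /= rev_cons cats1.
Qed.

Lemma cseq_mem m k x : x \in cseq m k -> k <= x <= m.
Proof. rewrite /cseq mem_rev mem_iota; lia. Qed.

Lemma cseq_split2 m k i : k <= i -> i < m ->
  cseq m k = cseq m i.+2 ++ [:: i.+1; i] ++ rev (iota k (i - k)).
Proof.
move=> h1 h2; rewrite /cseq.
have -> : m.+1 - k = (i - k) + (2 + (m.+1 - i.+2)) by lia.
rewrite !iotaD !rev_cat /=. have -> : k + (i - k) = i by lia.
by rewrite addn2 -catA.
Qed.

Lemma rp_fix R x : all (fun i => i.+1 < x) R -> rp R x = x.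
Proof. elim: R => //= m R IH /andP [h hR]. rewrite IH // swapO //; apply/eqP; lia. Qed.

Lemma rp_cseq m k : k <= m.+1 -> rp (cseq m k) k = m.+1.
Proof. move=> h; rewrite /cseq rp_iota_p; lia. Qed.

Lemma gw_cat (A : Type) (a b : seq A) : gw (a ++ b) = gw a ++ gw b.
Proof. exact: map_cat. Qed.

Lemma Ph_phiH n w : tvb_word_ok n w -> (Ph n w).2 =1 phiH w.
Proof.
elim: w => //= [[g b] w IH] /andP [hg hw] x /=. rewrite IH //.
by rewrite /Phl /= hg; case: g hg.
Qed.

Lemma phiH_inv n w w' : tvb_word_ok n w -> tvb_word_ok n w' -> tvb_eq n w w' -> phiH w =1 phiH w'.
Proof.
move=> h h' H x. have [_ H2] := E_main H. by rewrite -(Ph_phiH h) H2 (Ph_phiH h').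
Qed.

Lemma ok_rho n R : all (rngb n) R -> tvb_word_ok n (gw (map Rho R)).
Proof. by elim: R => //= m R IH /andP [hm /IH ->]; rewrite andbT. Qed.

Lemma ok_cat n a b : tvb_word_ok n (a ++ b) = tvb_word_ok n a && tvb_word_ok n b.
Proof. exact: all_cat. Qed.

Lemma ok_psi n u : tvh_word_ok n u -> tvb_word_ok n (psi u).
Proof.
elim: u => //= p u IH /andP [hp hu]. rewrite ok_cat IH // andbT psi_letterE.
case: p hp => [[k l|j] b] /=; last by rewrite andbT.
move=> /and3P [hk hl ne]. rewrite /tvb_word_ok /xseq /gwb map_cat all_cat /= !all_map.
have R := xms_rng hk hl ne. apply/and3P; split.
- by apply/allP => x hx; apply: (allP R).
- move: hk hl ne; rewrite /in1n; lia.
- by apply/allP => x hx; apply: (allP R); rewrite -mem_rev.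
Qed.

Lemma rp_Ph n R : all (rngb n) R -> phiH (gw (map Rho R)) = rp R.
Proof. move=> _; exact: (phiH_gwb_rho false). Qed.

Lemma psi_cons p u : psi (p :: u) = psi_letter p ++ psi u.
Proof. by []. Qed.

Section COX.
Variable n : nat.
Hypothesis hn : 2 <= n.
Local Notation "u ~ v" := (tvb_eq n u v) (at level 70).
Local Notation rng := (rngb n).
Local Hint Extern 0 (pres_eq _ _ _) => (simpl; reflexivity) : core.

Lemma nf m R : m <= n - 1 -> all (fun i => 1 <= i <= m) R ->
  exists R' k, [/\ all (fun i => 1 <= i < m) R', 1 <= k <= m.+1 &
     gw (map Rho R) ~ gw (map Rho (R' ++ cseq m k))].
Proof.
move=> hm; elim/last_ind: R => [|R j IH].
  move=> _; exists [::], m.+1; split => //; first lia. by rewrite cseq_top.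
rewrite all_rcons => /andP [hj hR]. have [R' [k [h1 h2 H]]] := IH hR.
have rj : rng j by rewrite /rngb; lia.
have HW : gw (map Rho (rcons R j)) ~ gw (map Rho R') ++ gw (map Rho (cseq m k)) ++ [:: rh j].
  by rewrite map_rcons -cats1 gw_cat H map_cat gw_cat -catA.
case: (ltnP j.+1 k) => hjk.
  exists (R' ++ [:: j]), k; split => //.
    by rewrite all_cat h1 /=; lia.
  rewrite HW !map_cat !gw_cat -!catA /=. apply: pe_cat_m; first reflexivity.
  symmetry; rewrite -[gw (map Rho (cseq m k))]cats0 far_comm // ?cats0 //.
  rewrite all_map; apply/allP => x hx /=. have := cseq_mem hx. rewrite /rngb /farb; lia.
case: (ltnP j k) => hjk2.
  exists R', j; split => //; first lia.
  rewrite HW. have -> : k = j.+1 by lia. rewrite (cseq_split (m := m) (k := j)); last lia. by rewrite !map_cat !gw_cat.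
case: (ltnP k j) => hjk3; last first.
  have ek : j = k by lia. subst j.
  exists R', k.+1; split => //; first lia.
  rewrite HW (cseq_split (m := m) (k := k)); last lia.
  rewrite !map_cat !gw_cat -!catA /= R_rr //. by rewrite cats0.
have [i ei] : exists i, j = i.+1 by exists j.-1; lia.
subst j.
exists (R' ++ [:: i]), k; split => //.
  by rewrite all_cat h1 /=; lia.
rewrite HW (cseq_split2 (m := m) (k := k) (i := i)); try lia.
rewrite !map_cat !gw_cat -!catA /=.
apply: pe_cat_m; first reflexivity.
have r1 : rng i.+1 by rewrite /rngb; lia.
have r0 : rng i by rewrite /rngb; lia.
have F1 : all (fun g => farg i.+1 g n) (map Rho (rev (iota k (i - k)))).
  rewrite all_map; apply/allP => x hx /=. move: hx; rewrite mem_rev mem_iota /rngb /farb; lia.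
have F2 : all (fun g => farg i g n) (map Rho (cseq m i.+2)).
  rewrite all_map; apply/allP => x hx /=. have := cseq_mem hx. rewrite /rngb /farb; lia.
rewrite -[[:: rh i.+1]]/(rh i.+1 :: [::]) -(@far_comm n hn i.+1 _ [::] r1 F1) cats0.
rewrite -R_rbraid; try lia.
by rewrite -(@far_comm n hn i _ _ r0 F2).
Qed.

Lemma cox m R : m <= n - 1 -> all (fun i => 1 <= i <= m) R ->
  (forall x, 1 <= x <= m.+1 -> rp R x = x) -> gw (map Rho R) ~ [::].
Proof.
elim: m R => [|m IH] R hm hR hP.
  case: R hR hP => [|i R] /=; first by move=> _ _. by move=> /andP [hi _]; lia.
have [R' [k [h1 h2 H]]] := nf hm hR.
have okR : all rng R by apply/allP => x /(allP hR); rewrite /rngb; lia.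
have okR' : all rng (R' ++ cseq m.+1 k).
  rewrite all_cat; apply/andP; split.
    by apply/allP => x /(allP h1); rewrite /rngb; lia.
  apply/allP => x /cseq_mem; rewrite /rngb; lia.
have E1 := phiH_inv (ok_rho okR) (ok_rho okR') H.
have E2 : forall x, rp R x = rp (R' ++ cseq m.+1 k) x.
  by move=> x; rewrite -(rp_Ph okR) -(rp_Ph okR') E1.
have fix' : forall x, m.+2 <= x -> rp R' x = x.
  move=> x hx; apply: rp_fix; apply/allP => y /(allP h1); lia.
have ek : k = m.+2.
  have := hP k h2; rewrite E2 rp_cat rp_cseq; last lia. rewrite fix' //; lia.
subst k. rewrite H cseq_top cats0. apply: IH.
- lia.
- by apply/allP => x /(allP h1); lia.
- move=> x hx. rewrite -[RHS](hP x); last by lia.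
  by rewrite E2 cseq_top cats0.
Qed.

Lemma xseq_12 i : xseq i i.+1 = [:: Sig i].
Proof. rewrite /xseq /xms ltnSn subnn /=. by have -> : minn i i.+1 = i by lia. Qed.

Lemma gen w : tvb_word_ok n w -> exists u R,
  [/\ tvh_word_ok n u, all rng R & w ~ psi u ++ gw (map Rho R)].
Proof.
elim: w => [|[g b] w IH] /=; first by move=> _; exists [::], [::]; split.
move=> /andP [hg hw]. have [u [R [hu hR H]]] := IH hw.
case: g hg => [i|i|j] /= hg.
- exists ((X i i.+1, b) :: u), R; split => //=.
    rewrite hu andbT /in1n; lia.
  by rewrite psi_cons psi_letterE /= xseq_12 /= H.
- have hi : rng i by [].
  exists (act (swap i i.+1) u), (i :: R); split => //=.
  + apply: ok_act => //; exact: good_swap.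
  + by rewrite hi.
  + rewrite H. transitivity (rh i :: psi u ++ gw (map Rho R)); first by case: b; rewrite ?R_rinv.
    by rewrite conj_psi.
- exists ((G j, b) :: u), R; split => //=; first by rewrite hu andbT.
  by rewrite psi_cons psi_letterE /= H.
Qed.

End COX.

Lemma rp_iota_dn p q : rp (iota p q) (p + q) = p.
Proof.
elim: q p => [|q IH] p /=; first by rewrite addn0.
by rewrite -addSnnS IH swapR.
Qed.

Lemma rp_iota_lo p q x : x < p -> rp (iota p q) x = x.
Proof.
elim: q p => [|q IH] p //= h. rewrite IH; last lia. apply: swapO; apply/eqP; lia.
Qed.

Lemma sortW n s t0 : uniq s -> all (fun a => t0 < a <= n) s -> exists R,
  [/\ all (rngb n) R, (forall x, x <= t0 -> rp R x = x) &
      (forall t, t < size s -> rp R (nth 0 s t) = t0 + t.+1)].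
Proof.
move: {2}(size s) (erefl (size s)) => z; elim: z s t0 => [|z IH] [|a s] t0 //=.
  by move=> _ _ _; exists [::]; split.
move=> [ez] /andP [ha hu] /andP [hab hs].
set D := iota t0.+1 (a - t0.+1).
have hD : rp D a = t0.+1.
  have := rp_iota_dn t0.+1 (a - t0.+1). by rewrite (_ : t0.+1 + (a - t0.+1) = a); last lia.
have hDlo : forall x, x <= t0 -> rp D x = x by move=> x hx; apply: rp_iota_lo; lia.
have rD : all (rngb n) D by apply/allP => x; rewrite mem_iota /rngb; lia.
have [g1 _] := good_rp rD.
have U : uniq (map (rp D) s) by rewrite map_inj_uniq //; exact: rp_inj.
have A : all (fun a => t0.+1 < a <= n) (map (rp D) s).
  apply/allP => y /mapP [b hb ->].
  have hb' := allP hs b hb.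
  have neab : b != a by apply/eqP => e; rewrite -e hb in ha.
  have y1 : rp D b != t0.+1.
    apply/eqP => e; rewrite -hD in e. move/eqP: neab; apply; exact: rp_inj e.
  have y2 : t0 < rp D b.
    rewrite ltnNge; apply/negP => le.
    have := hDlo _ le => e. have := rp_inj e; lia.
  have y3 : rp D b <= n.
    have := g1 b; rewrite /in1n; lia.
  lia.
have es : size (map (rp D) s) = z by rewrite size_map.
have [R' [h1 h2 h3]] := IH _ t0.+1 es U A.
exists (R' ++ D); split.
- by rewrite all_cat h1 rD.
- move=> x hx; rewrite rp_cat hDlo // h2 //; lia.
- case=> [|t] ht /=.
    by rewrite rp_cat hD h2 //; lia.
  rewrite rp_cat -(nth_map 0 0 (rp D)); last lia.
  rewrite h3; [lia | by rewrite size_map].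
Qed.

Lemma rcancel n R v : all (rngb n) R -> tvb_eq n (gw (map Rho (rev R)) ++ gw (map Rho R) ++ v) v.
Proof.
elim: R v => [|m R IH] v /=; first by move=> _; reflexivity.
move=> /andP [hm hR]. rewrite rev_cons map_rcons -cats1 gw_cat -catA /=.
by rewrite R_rr // IH.
Qed.

Section REL.
Variable n : nat.
Hypothesis hn : 2 <= n.
Local Notation "u ~ v" := (tvb_eq n u v) (at level 70).
Local Notation rng := (rngb n).
Local Hint Extern 0 (pres_eq _ _ _) => (simpl; reflexivity) : core.

Lemma conj_trick R r s : all rng R -> tvh_word_ok n r -> tvh_word_ok n s ->
  psi (act (rp R) r) ~ psi (act (rp R) s) -> psi r ~ psi s.
Proof.
move=> hR hr hs H.
transitivity (gw (map Rho (rev R)) ++ gw (map Rho R) ++ psi r ++ [::]).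
  by rewrite rcancel // cats0.
rewrite conj_R // H -conj_R //.
by rewrite rcancel // cats0.
Qed.

Lemma psiX k l : psi [:: (X k l, false)] = xw k l.
Proof. by rewrite psi_cons psi_letterE cats0. Qed.

Lemma ok_rel r s : tvh_rel n r s -> tvh_word_ok n r /\ tvh_word_ok n s.
Proof.
case=> [[i [j [k [l [h u -> ->]]]]]|[[i [j [k [h u -> ->]]]]|[[i [h -> ->]]|[[i [j [h u -> ->]]]|[[i [j [k [h u -> ->]]]]|[i [j [h u -> ->]]]]]]]];
  first [move: h u | move: h]; rewrite /tvh_word_ok /in1n /= ?inE; split; lia.
Qed.

Lemma psi_rel r s : tvh_rel n r s -> psi r ~ psi s.
Proof.
move=> H; have [okr oks] := ok_rel H.
move: H okr oks.
case=> [[i [j [k [l [h u -> ->]]]]]|[[i [j [k [h u -> ->]]]]|[[i [h -> ->]]|[[i [j [h u -> ->]]]|[[i [j [k [h u -> ->]]]]|[i [j [h u -> ->]]]]]]]] okr oks.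
- move: h => /and4P [hi hj hk hl].
  have hs : all (fun a => 0 < a <= n) [:: i; j; k; l].
    by move: hi hj hk hl; rewrite /in1n /= => -> -> -> ->.
  have [R [hR _ hP]] := sortW u hs.
  have Pi := hP 0 erefl; have Pj := hP 1 erefl; have Pk := hP 2 erefl; have Pl := hP 3 erefl.
  rewrite /= !add0n in Pi Pj Pk Pl.
  have h4 := (good_rp hR).1 _ hl. rewrite Pl /in1n in h4.
  apply: (conj_trick hR okr oks).
  rewrite /act /mapw /= Pi Pj Pk Pl !psi_cons !psi_letterE /= /minn /psi /=.
  apply: R_sfar; rewrite /rngb /farb; lia.
- move: h => /and3P [hi hj hk].
  have hs : all (fun a => 0 < a <= n) [:: i; k; j].
    by move: hi hj hk; rewrite /in1n /= => -> -> ->.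
  have u' : uniq [:: i; k; j] by move: u; rewrite /= !inE; lia.
  have [R [hR _ hP]] := sortW u' hs.
  have Pi := hP 0 erefl; have Pk := hP 1 erefl; have Pj := hP 2 erefl.
  rewrite /= !add0n in Pi Pj Pk.
  have h3 := (good_rp hR).1 _ hj. rewrite Pj /in1n in h3.
  apply: (conj_trick hR okr oks).
  rewrite /act /mapw /= Pi Pj Pk !psi_cons !psi_letterE /= /minn /psi /=.
  apply: R_sbraid; lia.
- rewrite /psi /= R_gg //.
- rewrite /psi /=. move: h => /andP [hi hj]. by rewrite R_gcomm.
- move: h => /and3P [hi hj hk].
  have hs : all (fun a => 0 < a <= n) [:: i; j; k].
    by move: hi hj hk; rewrite /in1n /= => -> -> ->.
  have [R [hR _ hP]] := sortW u hs.
  have Pi := hP 0 erefl; have Pj := hP 1 erefl; have Pk := hP 2 erefl.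
  rewrite /= !add0n in Pi Pj Pk.
  have h3 := (good_rp hR).1 _ hk. rewrite Pk /in1n in h3.
  apply: (conj_trick hR okr oks).
  rewrite /act /mapw /= Pi Pj Pk !psi_cons !psi_letterE /= /minn /psi /=.
  symmetry; apply: R_gs; rewrite /rngb /in1n; lia.
- move: h => /andP [hi hj].
  rewrite psiX !psi_cons !psi_letterE /psi /=.
  change (xw i j ~ gm i :: gm j :: xw j i ++ [:: gm j; gm i]).
  move: (hi) (hj); rewrite /in1n => hi' hj'.
  case: (ltnP j i) => hji.
    rewrite -[xw i j]cats0 (@gamma_x n hn j i) //; lia.
  have hij : i < j by rewrite ltn_neqAle u hji.
  rewrite (@gamma_x n hn i j) //; try lia. by rewrite gg_cancel // gg_cancel // cats0.
Qed.

End REL.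

Lemma psi_letter_inv (p : tvh_gen * bool) : psi_letter (p.1, true) = winv (psi_letter (p.1, false)).
Proof. by case: p => [[k l|j] b]. Qed.

Lemma tvh_to_tvb n (hn : 2 <= n) u v : tvh_eq n u v -> tvb_eq n (psi u) (psi v).
Proof.
elim=> {u v} [w|u v _ IH|u v w _ IH1 _ IH2|u a b v|u r s v Hr].
- reflexivity.
- by symmetry.
- by transitivity (psi v).
- rewrite !psi_cat !psi_cons. apply: pe_cat_m; first reflexivity.
  case: b => /=.
  + rewrite (psi_letter_inv (a, true)) /=. exact: winv_l.
  + rewrite (psi_letter_inv (a, false)) /=. exact: winv_r.
- rewrite !psi_cat. apply: pe_cat_m; first reflexivity.
  apply: pe_cat_m; last reflexivity. exact: psi_rel.
Qed.

Theorem mainTheorem9 (n : nat) (hn : 2 <= n) :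
  (* the x_kl and g_j lie in TVH_n *)
  (forall u, tvh_word_ok n u -> in_TVH n (psi u))
  (* they generate TVH_n *)
  /\ (forall w, tvb_word_ok n w -> in_TVH n w ->
        exists u, tvh_word_ok n u /\ tvb_eq n w (psi u))
  (* the listed relations are a complete set of defining relations *)
  /\ (forall u v, tvh_word_ok n u -> tvh_word_ok n v ->
        (tvb_eq n (psi u) (psi v) <-> tvh_eq n u v)).
Proof.
split; first by move=> u hu k hk; exact: phiH_psi.
split.
  move=> w hw hin. have [u [R [hu hR H]]] := gen hn hw.
  exists u; split => //.
  have okw : tvb_word_ok n (psi u ++ gw (map Rho R)) by rewrite ok_cat ok_psi // ok_rho.
  have P := phiH_inv hw okw H.
  have hR' : forall x, 1 <= x <= (n - 1).+1 -> rp R x = x.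
    move=> x hx. have hx' : 1 <= x <= n by lia.
    have := hin x hx'; rewrite P phiH_cat phiH_psi.
    change (phiH (gwb false (map Rho R)) x = x -> rp R x = x). by rewrite phiH_gwb_rho.
  have hR2 : all (fun i => 1 <= i <= n - 1) R by apply/allP => x /(allP hR); rewrite /rngb.
  rewrite H (cox hn (m := n - 1) (leqnn _) hR2 hR') cats0. reflexivity.
move=> u v hu hv; split; first exact: tvb_to_tvh.
exact: tvh_to_tvb.
Qed.
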